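(* Let $G$ be a finite connected graph with node set $V$ and radius $\operatorname{rad}(G)$. Suppose a one-to-all distance based algorithm for computing the radius of $G$ performs one-to-all distance queries from exactly the nodes of a set $L\subseteq V$. Then for every ranking $r$ of $V$, the set $L\cup A_r(L)$ is a radius certificate of $G$. Consequently, any one-to-all distance based algorithm for the radius performs at least $\frac{1}{2}|L_{OPT}|$ one-to-all distance queries, where $|L_{OPT}|$ is the minimum size of a radius certificate of $G$ (equivalently, the minimum size of a covering of $V$ with the collection $\{\overline{B}(u,\operatorname{rad}(G)) : u\in V\}$).
   Context: $G$ is an undirected unweighted connected graph with finite node set $V$; $d(u,v)$ is the shortest-path distance, $e(u)=\max_{v\in V}d(u,v)$ the eccentricity, $\operatorname{rad}(G)=\min_u e(u)$. A ranking $r$ is an injective map from $V$ to a totally ordered set. The antipode $A_r(u)$ of $u$ is the node $v$ maximizing the pair $(d(u,v),r(v))$ in lexicographic order (a furthest node from $u$ of highest rank), and $A_r(W)=\{A_r(u):u\in W\}$. The coball is $\overline{B}(u,\rho)=\{v\in V: d(u,v)\ge \rho\}$. A radius certificate is a set $L\subseteq V$ such that every $u\in V$ has $\max_{x\in L}d(u,x)\ge \operatorname{rad}(G)$. A one-to-all distance query from a node $x$ returns the vector $(d(x,v))_{v\in V}$. A one-to-all distance based algorithm is one that accesses the graph only through one-to-all distance queries and relies solely on the distances known from its queries, the triangle inequality and non-negativity of distances for bounding unknown distances (so its correctness certifies, for every node $u$, that $e(u)\ge\operatorname{rad}(G)$ by such reasoning). *)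

(* Defs.v *)
From HB Require Import structures.
From mathcomp Require Import all_boot all_order all_algebra.
Set Implicit Arguments. Unset Strict Implicit. Unset Printing Implicit Defensive.
Import Order.TTheory GRing.Theory Num.Theory.

Section Graph.
Variables (T : finType) (e : rel T).

Definition simple_graph := symmetric e /\ irreflexive e.
Definition connected_graph := forall u v : T, connect e u v.

Definition walk_of_length (u v : T) (n : nat) : bool :=
  [exists p : n.-tuple T, path e u p && (last u p == v)].

(* shortest-path distance: least n (< #|T|) with a walk of length n from u
   to v; in a connected graph this is exactly d(u,v). *)
Definition dist (u v : T) : nat := find (walk_of_length u v) (iota 0 #|T|).

Definition ecc (u : T) : nat := \max_(v : T) dist u v.

(* radius = min_u e(u)  (default #|T| only matters for the empty graph) *)
Definition rad : nat := \big[minn/#|T|]_(u : T) ecc u.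

(* radius certificate: every u has max_{x in L} d(u,x) >= rad(G)
   (max over the empty set is 0) *)
Definition radius_certificate (L : {set T}) : Prop :=
  forall u : T, rad <= \max_(x in L) dist u x.

Definition is_antipode (disp : Order.disp_t) (O : orderType disp) (r : T -> O)
    (u v : T) : bool :=
  [forall w, (dist u w < dist u v) || ((dist u w == dist u v) && (r w <= r v)%O)].

Definition antipode (disp : Order.disp_t) (O : orderType disp) (r : T -> O)
    (u : T) : T := odflt u [pick v | is_antipode r u v].

Definition antipode_set (disp : Order.disp_t) (O : orderType disp) (r : T -> O)
    (W : {set T}) : {set T} := [set antipode r u | u in W].

(* Knowledge of a one-to-all distance based algorithm that queried exactly
   the nodes of L: the correctness certifies e(u) >= rad(G) for every u
   using only the queried distances, triangle inequality and
   non-negativity, i.e. in every nonnegative function D satisfying the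
   triangle inequality and agreeing with d on all queried pairs, every u
   has some v with D(u,v) >= rad(G). *)
Definition consistent_distance (L : {set T}) (D : T -> T -> rat) : Prop :=
  [/\ forall a b, 0 <= D a b,
      forall a b c, D a c <= D a b + D b c
    & forall x v, x \in L -> D x v = (dist x v)%:R /\ D v x = (dist x v)%:R]%R.

Definition certifies_radius (L : {set T}) : Prop :=
  forall D : T -> T -> rat, consistent_distance L D ->
  forall u : T, exists v : T, ((rad%:R : rat) <= D u v)%R.

End Graph.

(* Main.v *)
Require Import Defs.
From HB Require Import structures.
From mathcomp Require Import all_boot all_order all_algebra.
From mathcomp Require Import zify.
Import Order.TTheory GRing.Theory Num.Theory.

Set Implicit Arguments.
Section Aux.
Variables (T : finType) (e : rel T).
Hypothesis (Hs : simple_graph e) (Hc : connected_graph e).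

Lemma dist_le u v n : walk_of_length e u v n -> dist e u v <= n.
Proof.
move=> W; rewrite /dist.
case: (ltnP n #|T|) => Hn; last first.
  by apply: leq_trans (find_size _ _) _; rewrite size_iota.
rewrite leqNgt; apply/negP => Hlt.
have := before_find 0 Hlt; rewrite nth_iota // add0n W //.
Qed.

Lemma dist_walk u v : walk_of_length e u v (dist e u v).
Proof.
have [p Hp Hl] := connectP (Hc u v).
move: Hl; case: (shortenP Hp) => p' Hp' Hu _ Hl.
have Hsz : size p' < #|T|.
  by have := max_card (mem (u :: p')); rewrite (card_uniqP Hu).
have W : walk_of_length e u v (size p').
  apply/existsP; exists (in_tuple p'); by rewrite /= Hp' Hl /=.
have Hhas : has (walk_of_length e u v) (iota 0 #|T|).
  by apply/hasP; exists (size p'); rewrite ?mem_iota.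
have := nth_find 0 Hhas; rewrite nth_iota ?add0n //.
by move: Hhas; rewrite has_find size_iota.
Qed.

Lemma walk_cat u v w n m :
  walk_of_length e u v n -> walk_of_length e v w m -> walk_of_length e u w (n + m).
Proof.
move=> /existsP [p /andP [Hp /eqP Hl]] /existsP [q /andP [Hq /eqP Hl']].
have Hs' : size (tval p ++ tval q) == n + m by rewrite size_cat !size_tuple.
apply/existsP; exists (Tuple Hs') => /=.
by rewrite cat_path last_cat Hl Hp Hq Hl' /=.
Qed.

Lemma walk_rev u v n : walk_of_length e u v n -> walk_of_length e v u n.
Proof.
case: Hs => Hsym _.
move=> /existsP [p /andP [Hp /eqP Hl]].
have Hs' : size (rev (belast u p)) == n by rewrite size_rev size_belast size_tuple.
apply/existsP; exists (Tuple Hs') => /=.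
rewrite -Hl rev_path.
rewrite (@eq_path _ _ e); last by move=> a b /=; rewrite Hsym.
rewrite Hp /=.
case: (tval p) => [|y s] //=.
by rewrite rev_cons last_rcons.
Qed.

Lemma dist_sym u v : dist e u v = dist e v u.
Proof.
by apply/eqP; rewrite eqn_leq !dist_le // walk_rev // dist_walk.
Qed.

Lemma dist_tri u v w : dist e u w <= dist e u v + dist e v w.
Proof. by apply: dist_le; apply: walk_cat; apply: dist_walk. Qed.

Lemma dist_refl u : dist e u u = 0.
Proof.
apply/eqP; rewrite -leqn0; apply: dist_le; apply/existsP; exists [tuple] => /=.
by rewrite eqxx.
Qed.

Lemma antipode_max disp (O : orderType disp) (r : T -> O) x w :
  dist e x w <= dist e x (antipode e r x).
Proof.
have Ex : exists v, is_antipode e r x v.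
  case: (@arg_maxP _ nat T x predT (dist e x) isT) => v0 _ Hv0.
  case: (@arg_maxP _ _ T v0 (fun w => dist e x w == dist e x v0) r (eqxx _))
    => v /eqP Hv Hr.
  exists v; apply/forallP => z.
  case: (ltngtP (dist e x z) (dist e x v)) => //= H.
    move: (Hv0 z isT) => /= h.
    have : (dist e x z <= dist e x v)%N by rewrite Hv; exact: h.
    by rewrite leqNgt H.
  by apply: Hr; rewrite H Hv.
rewrite /antipode; case: pickP => [v /forallP /(_ w) | H].
  by case/orP => [/ltnW //| /andP [/eqP -> _]].
by case: Ex => v; rewrite H.
Qed.

End Aux.
Unset Implicit Arguments.

Theorem theorem2 (T : finType) (e : rel T) (L : {set T}) :
  simple_graph e -> connected_graph e ->
  certifies_radius e L ->
  (forall (disp : Order.disp_t) (O : orderType disp) (r : T -> O),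
      injective r -> radius_certificate e (L :|: antipode_set e r L)) /\
  (forall Lopt : {set T}, radius_certificate e Lopt ->
      (forall C : {set T}, radius_certificate e C -> #|Lopt| <= #|C|) ->
      #|Lopt| <= 2 * #|L|).
Proof.
move=> Hs Hc Hcert.
have P1 : forall (disp : Order.disp_t) (O : orderType disp) (r : T -> O),
    radius_certificate e (L :|: antipode_set e r L).
  move=> disp O r u.
  pose f x a b := maxn (dist e x a - dist e x b) (dist e x b - dist e x a).
  pose Dn a b := \max_(x in L) f x a b.
  have Hcons : consistent_distance e L (fun a b => ((Dn a b)%:R : rat)%R).
    split.
    - by move=> a b; rewrite ler0n.
    - move=> a b c; rewrite -natrD ler_nat.
      apply/bigmax_leqP => x xL.
      have h1 : f x a b <= Dn a b := @leq_bigmax_cond _ _ (fun x => f x a b) _ xL.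
      have h2 : f x b c <= Dn b c := @leq_bigmax_cond _ _ (fun x => f x b c) _ xL.
      move: (Dn a b) (Dn b c) h1 h2 => M1 M2; rewrite /f /=; lia.
    - move=> x v xL.
      have -> : Dn v x = Dn x v.
        by apply: eq_bigr => y _; rewrite /f maxnC.
      suff -> : Dn x v = dist e x v by [].
      apply/eqP; rewrite eqn_leq; apply/andP; split.
        apply/bigmax_leqP => y _.
        have := dist_tri Hc y x v; have := dist_tri Hc y v x.
        rewrite (dist_sym Hs Hc v x) /f; lia.
      apply: leq_trans (@leq_bigmax_cond _ _ (fun y => f y x v) _ xL).
      by rewrite /f dist_refl //; lia.
  have [v Hv] := Hcert _ Hcons u.
  rewrite ler_nat in Hv.
  rewrite leqNgt; apply/negP => Hlt.
  have Hr : 0 < Defs.rad e by move: Hlt; case: (Defs.rad e).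
  have : Dn u v <= (Defs.rad e).-1.
    apply/bigmax_leqP => x xL.
    have m1 : x \in L :|: antipode_set e r L by rewrite in_setU xL.
    have m2 : antipode e r x \in L :|: antipode_set e r L.
      by rewrite in_setU /antipode_set imset_f ?orbT.
    have h1' := @leq_bigmax_cond _ _ (fun y => dist e u y) _ m1.
    have h2' := @leq_bigmax_cond _ _ (fun y => dist e u y) _ m2.
    have := @antipode_max _ e _ _ r x v.
    have := dist_tri Hc x u (antipode e r x).
    move: h1' h2' Hlt.
    move: (\max_(i | mem (L :|: antipode_set e r L) i) dist e u i) => M.
    rewrite /f (dist_sym Hs Hc u x) /=; lia.
  move: Hv Hr; move: (Dn u v) => M; lia.
split; first by move=> disp O r _; exact: P1.
move=> Lopt _ Hmin.
have := Hmin _ (P1 _ _ (fun _ : T => 0%N)).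
rewrite cardsU.
have H2 : #|antipode_set e (fun _ : T => 0%N) L| <= #|L| by apply: leq_imset_card.
move: H2; move: (antipode_set e (fun _ : T => 0%N) L) => A H2.
move: (#|A :&: L|) (#|L :&: A|) => a b. lia.
Qed.
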